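(* Let $S=K[x_1,\dots,x_n]$ with $K$ an $F$-finite field of prime characteristic $p$, $I\subseteq S$ a squarefree monomial ideal, and $R=S/I$. Let $\mathfrak q$ be a monomial prime ideal of $R$, $\overline R=R/\mathcal P(\mathfrak q)$, $e\in\mathbb N$, $q=p^e$, and $f\in R$ with image $\overline f\in\overline R$. Then: (1) if $f\in\mathfrak q_e$, then $\overline f\in(\overline{\mathfrak q})_e$ (contraction computed in $\overline R$); (2) $\overline f\in\overline{\mathfrak q}^{[q]}$ if and only if $f\in\mathfrak q_e$.
   Context: A monomial ideal of $R$ is one generated by images of monomials. For an $F$-finite $F$-pure ring $A$ and ideal $J$, $J_e=\{f\in A\mid \varphi(f^{1/p^e})\in J \text{ for all }\varphi\in\operatorname{Hom}_A(A^{1/p^e},A)\}$ and $\mathcal P(J)=\bigcap_{s\in\mathbb N}J_s$ (Cartier core). $\overline{\mathfrak q}$ is the image of $\mathfrak q$ in $\overline R$. *)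

(* Defs.v *)
From mathcomp Require Import all_boot all_algebra.
From mathcomp Require Import mpoly.

Set Implicit Arguments.
Unset Strict Implicit.
Unset Printing Implicit Defensive.

Import GRing.Theory.
Local Open Scope ring_scope.

Section Ideals.
Variable A : comPzRingType.

Definition is_ideal (J : A -> Prop) : Prop :=
  [/\ J 0, (forall x y, J x -> J y -> J (x + y)) & (forall a x, J x -> J (a * x))].

Definition ideal_gen (G : A -> Prop) : A -> Prop :=
  fun x => forall J, is_ideal J -> (forall g, G g -> J g) -> J x.

Definition is_prime_ideal (J : A -> Prop) : Prop :=
  [/\ is_ideal J, ~ J 1 & (forall a b, J (a * b) -> J a \/ J b)].

Definition frob_power (J : A -> Prop) (q : nat) : A -> Prop :=
  ideal_gen (fun y => exists2 x, J x & y = x ^+ q).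

(* Hom_A(A^{1/p^e}, A), identifying A^{1/p^e} with A via x^{1/p^e} |-> x:
   additive maps phi : A -> A with phi (a^(p^e) * b) = a * phi b. *)
Definition cartier_map (p e : nat) (phi : A -> A) : Prop :=
  (forall x y, phi (x + y) = phi x + phi y) /\
  (forall a b, phi (a ^+ (p ^ e) * b) = a * phi b).

(* J_e = { f | phi(f^{1/p^e}) \in J for all phi in Hom_A(A^{1/p^e}, A) } *)
Definition cartier_contr (p e : nat) (J : A -> Prop) : A -> Prop :=
  fun f => forall phi, cartier_map p e phi -> J (phi f).

Definition cartier_core (p : nat) (J : A -> Prop) : A -> Prop :=
  fun f => forall s : nat, cartier_contr p s J f.

End Ideals.

Definition img_pred (A B : Type) (g : A -> B) (J : A -> Prop) : B -> Prop :=
  fun y => exists2 x, J x & y = g x.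

Definition F_finite_field (K : fieldType) (p : nat) : Prop :=
  exists s : seq K, forall x : K,
    exists c : 'I_(size s) -> K, x = \sum_(i < size s) (c i) ^+ p * s`_i.

Definition sqfree_monomial_ideal (K : fieldType) (n : nat)
  (I : {mpoly K[n]} -> Prop) : Prop :=
  exists M : 'X_{1..n} -> Prop,
    (forall m, M m -> forall i : 'I_n, (m i <= 1)%N) /\
    (forall x, I x <-> ideal_gen (fun y => exists2 m, M m & y = 'X_[m]) x).

Definition monomial_ideal_of (K : fieldType) (n : nat) (R : comPzRingType)
  (pi : {mpoly K[n]} -> R) (J : R -> Prop) : Prop :=
  exists M : 'X_{1..n} -> Prop,
    forall x, J x <-> ideal_gen (fun y => exists2 m, M m & y = pi 'X_[m]) x.

(* Main.v *)
Require Import Defs.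
From mathcomp Require Import all_boot all_algebra.
From mathcomp Require Import mpoly.
From mathcomp Require Import zify ring.
From Stdlib Require Import ClassicalEpsilon Classical_Prop Classical_Pred_Type.

Set Implicit Arguments.
Unset Strict Implicit.
Unset Printing Implicit Defensive.
Import GRing.Theory.
Local Open Scope ring_scope.



Section GenIdeal.
Variable A : comPzRingType.
Implicit Types (J : A -> Prop) (G : A -> Prop).

Lemma ideal_gen_is_ideal G : is_ideal (ideal_gen G).
Proof.
split.
- by move=> J [] .
- by move=> x y Hx Hy J HJ HG; case: (HJ) => _ Hadd _; apply: Hadd; [apply: Hx|apply: Hy].
- by move=> a x Hx J HJ HG; case: (HJ) => _ _ Hm; apply: Hm; apply: Hx.
Qed.

Lemma ideal_gen_min G J : is_ideal J -> (forall g, G g -> J g) ->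
  forall x, ideal_gen G x -> J x.
Proof. by move=> HJ HG x Hx; apply: Hx. Qed.

Lemma ideal_gen_in G g : G g -> ideal_gen G g.
Proof. by move=> Hg J _ HG; apply: HG. Qed.

Lemma ideal0 J : is_ideal J -> J 0.
Proof. by case. Qed.
Lemma idealD J x y : is_ideal J -> J x -> J y -> J (x + y).
Proof. by case=> _ H _; apply: H. Qed.
Lemma idealMl J a x : is_ideal J -> J x -> J (a * x).
Proof. by case=> _ _ H; apply: H. Qed.
Lemma idealMr J a x : is_ideal J -> J x -> J (x * a).
Proof. by move=> HJ Hx; rewrite mulrC; apply: idealMl. Qed.
Lemma idealN J x : is_ideal J -> J x -> J (- x).
Proof. by move=> HJ Hx; rewrite -mulN1r; apply: idealMl. Qed.
Lemma idealB J x y : is_ideal J -> J x -> J y -> J (x - y).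
Proof. by move=> HJ Hx Hy; apply: idealD => //; apply: idealN. Qed.

Lemma ideal_sum J (I : Type) (r : seq I) (P : pred I) (F : I -> A) :
  is_ideal J -> (forall i, P i -> J (F i)) -> J (\sum_(i <- r | P i) F i).
Proof.
move=> HJ HF; apply: (big_ind J); [exact: ideal0 | |].
- by move=> x y; apply: idealD.
- exact: HF.
Qed.

Lemma cartier_map0 p e (phi : A -> A) : cartier_map p e phi -> phi 0 = 0.
Proof.
case=> Hadd _; apply: (@addrI _ (phi 0)); by rewrite -Hadd !addr0.
Qed.

Lemma cartier_mapN p e (phi : A -> A) x : cartier_map p e phi -> phi (- x) = - phi x.
Proof.
move=> Hc; apply/eqP; rewrite -subr_eq0 opprK; case: (Hc) => Hadd _.
by rewrite -Hadd addNr (cartier_map0 Hc).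
Qed.

Lemma cartier_map_sum p e (phi : A -> A) (I : Type) (r : seq I) (P : pred I) (F : I -> A) :
  cartier_map p e phi -> phi (\sum_(i <- r | P i) F i) = \sum_(i <- r | P i) phi (F i).
Proof.
move=> Hc; apply: (big_morph phi); first by case: Hc.
exact: cartier_map0 Hc.
Qed.

Lemma cartier_mapMl p e (phi : A -> A) r : cartier_map p e phi ->
  cartier_map p e (fun x => phi (r * x)).
Proof.
case=> Hadd Hm; split.
- by move=> x y; rewrite mulrDr Hadd.
- by move=> a b; rewrite mulrCA Hm.
Qed.

Lemma cartier_contr_ideal p e J : is_ideal J -> is_ideal (cartier_contr p e J).
Proof.
move=> HJ; split.
- by move=> phi Hc; rewrite (cartier_map0 Hc); apply: ideal0.
- move=> x y Hx Hy phi Hc; case: (Hc) => Hadd _; rewrite Hadd.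
  by apply: idealD => //; [apply: Hx|apply: Hy].
- by move=> a x Hx phi Hc; apply: (Hx (fun y => phi (a * y))); apply: cartier_mapMl.
Qed.

Lemma cartier_core_ideal p J : is_ideal J -> is_ideal (cartier_core p J).
Proof.
move=> HJ; split.
- by move=> s; apply: ideal0; apply: (cartier_contr_ideal p s HJ).
- by move=> x y Hx Hy s; apply: (idealD (cartier_contr_ideal p s HJ)); [apply: Hx|apply: Hy].
- by move=> a x Hx s; apply: (idealMl _ (cartier_contr_ideal p s HJ)); apply: Hx.
Qed.

Lemma frob_contr p e J : is_ideal J ->
  forall x, frob_power J (p ^ e) x -> cartier_contr p e J x.
Proof.
move=> HJ y Hy; apply: (ideal_gen_min (cartier_contr_ideal p e HJ) _ Hy).
move=> g [x Hx ->] phi [Hadd Hm].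
by rewrite -[x ^+ _]mulr1 Hm; apply: idealMr.
Qed.

Lemma prime_ideal_expr J x k : is_prime_ideal J -> J (x ^+ k) -> J x.
Proof.
case=> HJ H1 Hp; elim: k => [|k IH]; first by rewrite expr0.
by rewrite exprS => /Hp [] // /IH.
Qed.

Lemma prime_ideal_prod J (I : eqType) (r : seq I) (P : pred I) (F : I -> A) :
  is_prime_ideal J -> J (\prod_(i <- r | P i) F i) -> exists i, [/\ i \in r, P i & J (F i)].
Proof.
move=> [HJ H1 Hp]; elim: r => [|i r IH]; first by rewrite big_nil.
rewrite big_cons; case: ifP => Pi.
- case/Hp => [Hi|]; first by exists i; rewrite mem_head.
  by case/IH => j [jr Pj Hj]; exists j; rewrite in_cons jr orbT.
- by case/IH => j [jr Pj Hj]; exists j; rewrite in_cons jr orbT.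
Qed.

End GenIdeal.



Section Frob.
Variable R : comNzRingType.
Variables (p : nat) (charR : p \in [pchar R]).

Lemma pnat_pe e : (GRing.pchar R).-nat (p ^ e)%N.
Proof. by rewrite pnatX (pnatE _ (pcharf_prime charR)) charR. Qed.

Lemma frobD e (x y : R) : (x + y) ^+ (p ^ e)%N = x ^+ (p ^ e)%N + y ^+ (p ^ e)%N.
Proof. exact: exprDn_pchar (pnat_pe e). Qed.

Lemma frobN e (x : R) : (- x) ^+ (p ^ e)%N = - x ^+ (p ^ e)%N.
Proof. exact: exprNn_pchar (pnat_pe e). Qed.

Lemma frobB e (x y : R) : (x - y) ^+ (p ^ e)%N = x ^+ (p ^ e)%N - y ^+ (p ^ e)%N.
Proof. by rewrite frobD frobN. Qed.

Lemma frob0 e : (0 : R) ^+ (p ^ e)%N = 0.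
Proof. by rewrite expr0n expn_eq0 eqn0Ngt (prime_gt0 (pcharf_prime charR)). Qed.

Lemma frob_sum e (I : Type) (r : seq I) (P : pred I) (F : I -> R) :
  (\sum_(i <- r | P i) F i) ^+ (p ^ e)%N = \sum_(i <- r | P i) (F i) ^+ (p ^ e)%N.
Proof.
apply: (big_morph (fun x => x ^+ (p ^ e)%N)); [exact: frobD | exact: frob0].
Qed.

End Frob.



Section FieldPsi.
Variable K : fieldType.
Variables (p : nat) (charK : p \in [pchar K]).

Definition spanQ (Q : nat) (s : seq K) (x : K) :=
  exists c : 'I_(size s) -> K, x = \sum_(i < size s) (c i) ^+ Q * s`_i.

Variable e : nat.
Local Notation Q := (p ^ e)%N.

Lemma Q_gt0 : (0 < Q)%N.
Proof. by rewrite expn_gt0 (prime_gt0 (pcharf_prime charK)). Qed.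

Lemma spanQ0 s : spanQ Q s 0.
Proof.
exists (fun _ => 0); rewrite big1 // => i _.
by rewrite (frob0 charK) mul0r.
Qed.

Lemma spanQD s x y : spanQ Q s x -> spanQ Q s y -> spanQ Q s (x + y).
Proof.
move=> [c ->] [d ->]; exists (fun i => c i + d i); rewrite -big_split /=.
by apply: eq_bigr => i _; rewrite (frobD charK) mulrDl.
Qed.

Lemma spanQZ s a x : spanQ Q s x -> spanQ Q s (a ^+ Q * x).
Proof.
move=> [c ->]; exists (fun i => a * c i); rewrite mulr_sumr.
by apply: eq_bigr => i _; rewrite exprMn mulrA.
Qed.

Lemma spanQ_sum s (I : Type) (r : seq I) (P : pred I) (F : I -> K) :
  (forall i, P i -> spanQ Q s (F i)) -> spanQ Q s (\sum_(i <- r | P i) F i).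
Proof.
move=> HF; apply: (big_ind (spanQ Q s)); [exact: spanQ0 | exact: spanQD | exact: HF].
Qed.

Lemma spanQ_nth s (k : 'I_(size s)) : spanQ Q s s`_k.
Proof.
exists (fun i => (i == k)%:R); rewrite (bigD1 k) //= eqxx expr1n mul1r big1 ?addr0 //.
by move=> i /negbTE ->; rewrite (frob0 charK) mul0r.
Qed.

Lemma spanQ_mem s y : y \in s -> spanQ Q s y.
Proof.
move=> ys; have := spanQ_nth (Ordinal (etrans (index_mem y s) ys)).
by rewrite /= nth_index.
Qed.

End FieldPsi.

Section FieldPsi2.
Variable K : fieldType.
Variables (p : nat) (charK : p \in [pchar K]) (K_Ffin : F_finite_field K p).

Lemma spanning_exists e : exists s : seq K, forall x, spanQ (p ^ e)%N s x.
Proof.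
elim: e => [|e [s Hs]].
  exists [:: 1] => x; exists (fun _ => x).
  by rewrite big_ord_recl big_ord0 /= expn0 expr1 mulr1 addr0.
case: K_Ffin => t Ht.
pose L := [seq u * v | u <- s, v <- map (fun w => w ^+ (p ^ e)%N) t].
exists L => x.
have [c ->] := Hs x.
apply: (spanQ_sum charK) => i _.
have [d Hd] := Ht (c i).
rewrite Hd (frob_sum charK) mulr_suml.
apply: (spanQ_sum charK) => j _.
rewrite exprMn -exprM -expnS mulrAC.
rewrite -mulrA; apply: spanQZ.
apply: (spanQ_mem charK).
apply/allpairsP; exists (s`_i, t`_j ^+ (p ^ e)%N) => /=; split => //.
  by apply: mem_nth.
by apply/mapP; exists t`_j => //; apply: mem_nth.
Qed.


Lemma minimal_spanning e : exists s : seq K, (forall x, spanQ (p ^ e)%N s x) /\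
  (forall s' : seq K, (forall x, spanQ (p ^ e)%N s' x) -> (size s <= size s')%N).
Proof.
have [s0 Hs0] := spanning_exists e.
suff: forall m (s : seq K), (size s <= m)%N -> (forall x, spanQ (p ^ e)%N s x) ->
  exists s : seq K, (forall x, spanQ (p ^ e)%N s x) /\
  (forall s' : seq K, (forall x, spanQ (p ^ e)%N s' x) -> (size s <= size s')%N).
  by move=> H; apply: (H (size s0) s0).
elim=> [|m IH] s Hsm Hs.
  exists s; split => // s' _; by move: Hsm; rewrite leqn0 => /eqP ->.
case: (classic (exists s' : seq K, (forall x, spanQ (p ^ e)%N s' x) /\ (size s' < size s)%N)).
  move=> [s' [Hs' Hlt]]; apply: (IH s') => //.
  by rewrite -ltnS (leq_trans Hlt).
move=> Hno; exists s; split => // s' Hs'.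
rewrite leqNgt; apply/negP => Hlt; apply: Hno; by exists s'.
Qed.

Lemma psi_exists e : exists psi : K -> K,
  [/\ (forall x y, psi (x + y) = psi x + psi y),
      (forall a b, psi (a ^+ (p ^ e)%N * b) = a * psi b) &
      (exists v, psi v = 1)].
Proof.
have [s [Hs Hmin]] := minimal_spanning e.
set Q := (p ^ e)%N.
case: s Hs Hmin => [|s0 s'] Hs Hmin.
  have [c] := Hs 1; rewrite big_ord0 => /eqP; by rewrite oner_eq0.
set s := s0 :: s'.
have uniq0 : forall c d : 'I_(size s) -> K,
    \sum_(i < size s) (c i) ^+ Q * s`_i = \sum_(i < size s) (d i) ^+ Q * s`_i ->
    c ord0 = d ord0.
  move=> c d Hcd; apply/eqP; apply/negPn/negP => Hne.
  have Hsp : spanQ Q s' s0.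
    set eps := c ord0 - d ord0.
    have eps0 : eps != 0 by rewrite subr_eq0.
    have epsQ : eps ^+ Q != 0 by rewrite expf_neq0.
    exists (fun i => (d (lift ord0 i) - c (lift ord0 i)) / eps).
    apply: (mulfI epsQ); rewrite mulr_sumr.
    transitivity (\sum_(i < size s') (d (lift ord0 i) ^+ Q - c (lift ord0 i) ^+ Q) * s'`_i); last first.
      apply: eq_bigr => i _; rewrite mulrA -exprMn (mulrC eps) divfK //.
      by rewrite (frobB charK).
    move: Hcd; rewrite !big_ord_recl /= => Hcd.
    have -> : \sum_(i < size s') (d (lift ord0 i) ^+ Q - c (lift ord0 i) ^+ Q) * s'`_i =
      \sum_(i < size s') d (lift ord0 i) ^+ Q * s'`_i - \sum_(i < size s') c (lift ord0 i) ^+ Q * s'`_i.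
      by rewrite -sumrB; apply: eq_bigr => i _; rewrite mulrBl.
    have -> : \sum_(i < size s') d (lift ord0 i) ^+ Q * s'`_i =
      c ord0 ^+ Q * s0 + \sum_(i < size s') c (lift ord0 i) ^+ Q * s'`_i - d ord0 ^+ Q * s0.
      by rewrite Hcd addrAC subrr add0r.
    rewrite /eps (frobB charK).
    set A := \sum_(i < size s') _.
    by rewrite mulrBl addrAC addrK.
  have Hs' : forall x, spanQ Q s' x.
    move=> x; have [a ->] := Hs x; rewrite big_ord_recl /=.
    apply: (spanQD charK); first exact: spanQZ.
    by apply: (spanQ_sum charK) => i _; apply: spanQZ; apply: (spanQ_nth charK).
  by have := Hmin s' Hs'; rewrite /= ltnn.
pose psi x := epsilon (inhabits 0) (fun a => exists c : 'I_(size s) -> K,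
   c ord0 = a /\ x = \sum_(i < size s) (c i) ^+ Q * s`_i).
have psiE : forall x (c : 'I_(size s) -> K),
    x = \sum_(i < size s) (c i) ^+ Q * s`_i -> psi x = c ord0.
  move=> x c Hx.
  have [d [<- Hd]] : exists d : 'I_(size s) -> K,
      d ord0 = psi x /\ x = \sum_(i < size s) (d i) ^+ Q * s`_i.
    apply: (epsilon_spec (inhabits 0) (fun a => exists c : 'I_(size s) -> K,
       c ord0 = a /\ x = \sum_(i < size s) (c i) ^+ Q * s`_i)).
    by have [c' ->] := Hs x; exists (c' ord0), c'.
  by apply: uniq0; rewrite -Hd -Hx.
exists psi; split.
- move=> x y; have [c Hc] := Hs x; have [d Hd] := Hs y.
  rewrite (psiE x c Hc) (psiE y d Hd).
  rewrite (psiE (x + y) (fun i => c i + d i)) // Hc Hd -big_split /=.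
  by apply: eq_bigr => i _; rewrite (frobD charK) mulrDl.
- move=> a b; have [c Hc] := Hs b.
  rewrite (psiE b c Hc) (psiE _ (fun i => a * c i)) // Hc mulr_sumr.
  by apply: eq_bigr => i _; rewrite exprMn mulrA.
- exists s0; rewrite (psiE s0 (fun i => (i == ord0)%:R)) /= ?eqxx //.
  rewrite big_ord_recl /= ?eqxx expr1n mul1r big1 ?addr0 // => i _.
  idtac.
  by rewrite (frob0 charK) mul0r.
Qed.

Lemma psi_exists_at e (c : K) : c != 0 -> exists psi : K -> K,
  [/\ (forall x y, psi (x + y) = psi x + psi y),
      (forall a b, psi (a ^+ (p ^ e)%N * b) = a * psi b) &
      psi c = 1].
Proof.
move=> c0; have [psi [Hadd Hm [v Hv]]] := psi_exists e.
exists (fun x => psi (v / c * x)); split.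
- by move=> x y; rewrite mulrDr Hadd.
- by move=> a b; rewrite mulrCA Hm.
- by rewrite divfK.
Qed.

End FieldPsi2.



Section Mono.
Variable K : fieldType.
Variable n : nat.
Local Notation S := {mpoly K[n]}.

Definition divgen (G : 'X_{1..n} -> Prop) (a : 'X_{1..n}) :=
  exists2 m, G m & (m <= a)%MM.

Definition mgen (G : 'X_{1..n} -> Prop) : S -> Prop :=
  fun y => exists2 m, G m & y = 'X_[m].

Lemma msupp_zero : msupp (0 : S) = [::].
Proof. by rewrite -mpolyC0 msupp0. Qed.

Lemma mideal_terms G (g : S) : ideal_gen (mgen G) g ->
  forall a, a \in msupp g -> divgen G a.
Proof.
move=> Hg; apply: (@ideal_gen_min _ (mgen G) (fun g : S => forall a, a \in msupp g -> divgen G a) _ _ g Hg).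
- split.
  + by move=> a; rewrite msupp_zero.
  + move=> x y Hx Hy a /msuppD_le; rewrite mem_cat => /orP [/Hx|/Hy] //.
  + move=> r x Hx a /msuppM_le /allpairsP [[m1 m2] /= [_ m2x ->]].
    have [m Gm le] := Hx _ m2x; exists m => //.
    exact: lepm_trans le (lem_addl _ _).
- move=> y [m Gm ->] a; rewrite msuppX mem_seq1 => /eqP ->.
  by exists m => //; apply: lepm_refl.
Qed.

Lemma divgen_mideal G a : divgen G a -> ideal_gen (mgen G) 'X_[a].
Proof.
move=> [m Gm le]; rewrite -(submK le) mpolyXD.
apply: (idealMl _ (ideal_gen_is_ideal _)); apply: ideal_gen_in; by exists m.
Qed.

Lemma mpoly_terms (g : S) : g = \sum_(a <- msupp g) (g@_a)%:MP * 'X_[a].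
Proof. by rewrite {1}(mpolyE g); apply: eq_bigr => a _; rewrite mul_mpolyC. Qed.

End Mono.



Definition pb (P : Prop) : bool := if excluded_middle_informative P then true else false.
Lemma pbE (P : Prop) : pb P <-> P.
Proof. by rewrite /pb; case: excluded_middle_informative. Qed.
Lemma pbF (P : Prop) : pb P = false <-> ~ P.
Proof. by rewrite /pb; case: excluded_middle_informative. Qed.

Section Struct.
Variable K : fieldType.
Variable n : nat.
Local Notation S := {mpoly K[n]}.
Variable I : S -> Prop.
Variable M : 'X_{1..n} -> Prop.
Hypothesis HMsq : forall m, M m -> forall i : 'I_n, (m i <= 1)%N.
Hypothesis HMI : forall x, I x <-> ideal_gen (fun y => exists2 m, M m & y = 'X_[m]) x.
Variable R : comPzRingType.
Variable pi : {rmorphism S -> R}.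
Hypothesis pi_surj : forall y : R, exists x, pi x = y.
Hypothesis pi_ker : forall x, pi x = 0 <-> I x.
Variable qq : R -> Prop.
Hypothesis qq_prime : is_prime_ideal qq.
Variable Mq : 'X_{1..n} -> Prop.
Hypothesis HMq : forall x, qq x <-> ideal_gen (fun y => exists2 m, Mq m & y = pi 'X_[m]) x.

Lemma qq_ideal : is_ideal qq.
Proof. by case: qq_prime. Qed.

Lemma I_ideal : is_ideal I.
Proof.
have [H0 HD HM] := ideal_gen_is_ideal (fun y : S => exists2 m, M m & y = 'X_[m]).
split; first by apply/HMI.
- by move=> x y /HMI Hx /HMI Hy; apply/HMI; apply: HD.
- by move=> a x /HMI Hx; apply/HMI; apply: HM.
Qed.

Definition nf (a : 'X_{1..n}) := I 'X_[a].

Lemma nf_divgen a : nf a <-> divgen M a.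
Proof.
split.
- move=> /HMI H; apply: (mideal_terms H); by rewrite msuppX mem_seq1.
- by move=> H; apply/HMI; apply: divgen_mideal.
Qed.

Lemma nf_supp (a b : 'X_{1..n}) : (forall i, (0 < a i)%N -> (0 < b i)%N) -> nf a -> nf b.
Proof.
move=> Hab /nf_divgen [m Mm le]; apply/nf_divgen; exists m => //.
apply/mnm_lepP => i; have := HMsq Mm i; have := (mnm_lepP le) i.
case: (m i) => [|[|k]] //= H1 _.
by apply: Hab.
Qed.

Lemma I_terms g : I g -> forall a, a \in msupp g -> nf a.
Proof.
move=> /HMI H a Ha; apply/nf_divgen; exact: (mideal_terms H).
Qed.

Lemma piX0 a : pi 'X_[a] = 0 <-> nf a.
Proof. exact: pi_ker. Qed.

Definition qv (i : 'I_n) := qq (pi 'X_i).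

Lemma qqX (a : 'X_{1..n}) : qq (pi 'X_[a]) <-> exists i, (0 < a i)%N /\ qv i.
Proof.
split.
- rewrite mpolyXE_id rmorph_prod => /(prime_ideal_prod qq_prime) [i [_ _]].
  rewrite rmorphXn; case Hai: (a i) => [|k].
    by rewrite expr0; case: qq_prime.
  by move=> /(prime_ideal_expr qq_prime) H; exists i; rewrite Hai.
- move=> [i [Hai Hq]].
  have le : (U_(i) <= a)%MM by rewrite lep1mP -lt0n.
  rewrite -(submK le) mpolyXD rmorphM; exact: (idealMl _ qq_ideal).
Qed.

Definition Dp (h : S) := forall a, a \in msupp h ->
  (exists i, (0 < a i)%N /\ qv i) \/ nf a.

Lemma Dp_add x y : Dp x -> Dp y -> Dp (x + y).
Proof. by move=> Hx Hy a /msuppD_le; rewrite mem_cat => /orP [/Hx|/Hy]. Qed.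

Lemma Dp_mul r y : Dp y -> Dp (r * y).
Proof.
move=> Hy a /msuppM_le /allpairsP [[m1 m2] /= [_ m2y ->]].
case: (Hy _ m2y) => [[i [Hi Hq]]|Hnf].
- by left; exists i; split => //; rewrite mnmDE addn_gt0 Hi orbT.
- right; apply: (nf_supp _ Hnf) => i; rewrite mnmDE addn_gt0 => ->; by rewrite orbT.
Qed.

Lemma Dp_I g : I g -> Dp g.
Proof. by move=> Hg a Ha; right; apply: (I_terms Hg). Qed.

Lemma Dp_qq h : qq (pi h) -> Dp h.
Proof.
move=> /HMq H.
pose PR (y : R) := forall g, pi g = y -> Dp g.
suff : PR (pi h) by apply.
apply: (ideal_gen_min _ _ H).
- split.
  + by move=> g /pi_ker; apply: Dp_I.
  + move=> x y Hx Hy g Hg; have [g1 Hg1] := pi_surj x.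
    rewrite -(subrK g1 g); apply: Dp_add; last exact: Hx.
    by apply: Hy; rewrite rmorphB Hg Hg1 addrC addKr.
  + move=> a x Hx g Hg; have [ga Hga] := pi_surj a; have [gx Hgx] := pi_surj x.
    rewrite -(subrK (ga * gx) g); apply: Dp_add.
      by apply: Dp_I; apply/pi_ker; rewrite rmorphB rmorphM Hg Hga Hgx subrr.
    by apply: Dp_mul; apply: Hx.
- move=> y [m Mm ->] g Hg.
  rewrite -(subrK 'X_[m] g); apply: Dp_add.
    by apply: Dp_I; apply/pi_ker; rewrite rmorphB Hg subrr.
  move=> a; rewrite msuppX mem_seq1 => /eqP ->.
  have : qq (pi 'X_[m]) by apply/HMq; apply: ideal_gen_in; exists m.
  by move=> /qqX H1; left.
Qed.

Definition fF : 'X_{1..n} := [multinom (~~ pb (qv i) : nat) | i < n].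

Lemma fF_pos i : (0 < fF i)%N <-> ~ qv i.
Proof.
rewrite mnmE; case E: (pb (qv i)) => /=.
- by split => // H; move/pbE: E.
- by split => // _; apply/pbF.
Qed.

Lemma not_qq_fF : ~ qq (pi 'X_[fF]).
Proof. by move/qqX => [i [/fF_pos H1 H2]]. Qed.

Lemma not_nf_fF : ~ nf fF.
Proof. move=> /piX0 H; apply: not_qq_fF; rewrite H; exact: ideal0 qq_ideal. Qed.

Lemma polyF h : (forall a, a \in msupp h -> forall i, (0 < a i)%N -> ~ qv i) ->
  qq (pi h) -> h = 0.
Proof.
move=> Hh /Dp_qq HD; apply/eqP; rewrite -msupp_eq0.
case E: (msupp h) => [//|a s]; exfalso.
have Ha : a \in msupp h by rewrite E mem_head.
case: (HD a Ha) => [[i [Hi Hq]]|Hnf]; first exact: (Hh a Ha i Hi).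
apply: not_nf_fF; apply: (nf_supp _ Hnf) => i Hi; apply/fF_pos; exact: Hh Ha i Hi.
Qed.

Lemma ann_qq (c : 'X_{1..n}) r : (forall i, (0 < fF i)%N -> (0 < c i)%N) -> ~ nf c ->
  pi 'X_[c] * r = 0 -> qq r.
Proof.
move=> Hc Hnc Hr; have [h Hh] := pi_surj r; subst r.
have HI : I ('X_[c] * h) by apply/pi_ker; rewrite rmorphM.
rewrite (mpoly_terms h) rmorph_sum big_seq; apply: (ideal_sum _ qq_ideal) => a Ha.
rewrite rmorphM; apply: (idealMl _ qq_ideal).
case: (classic (exists i, (0 < a i)%N /\ qv i)) => [H|H]; first by apply/qqX.
exfalso; apply: Hnc.
have Hca : nf (c + a).
  apply: (I_terms HI); rewrite mcoeff_msupp mulrC mcoeffMX -mcoeff_msupp //.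
apply: (nf_supp _ Hca) => i; rewrite mnmDE addn_gt0 => /orP [//|Hai].
apply: Hc; apply/fF_pos => Hq; apply: H; by exists i.
Qed.

Definition Hv (i : 'I_n) := forall g, ~ nf (g + fF) -> ~ nf (g + fF + U_(i))%MM.

Lemma notHv_core (p : nat) (p_pos : (0 < p)%N) i : ~ Hv i -> cartier_core p qq (pi 'X_i).
Proof.
rewrite /Hv => HH; have [g Hg'] := not_all_ex_not _ _ HH.
have [Hg Hgi] := imply_to_and _ _ Hg'.
have Hgi' : nf (g + fF + U_(i))%MM by apply: NNPP.
move=> s phi [Hadd Hm].
set u := pi 'X_[g + fF].
have Hu : u * pi 'X_i = 0 by rewrite -rmorphM -mpolyXD; apply/piX0.
apply: (@ann_qq (g + fF)%MM) => //.
  by move=> j Hj; rewrite mnmDE addn_gt0 Hj orbT.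
have Hps : (0 < p ^ s)%N by rewrite expn_gt0 p_pos.
rewrite -Hm -(prednK Hps) exprS mulrAC Hu mul0r.
by apply: (@addrI _ (phi 0)); rewrite -Hadd !addr0.
Qed.

Lemma Hv_iter (l : seq 'I_n) : (forall i, i \in l -> Hv i) ->
  forall g, ~ nf (g + fF) -> ~ nf (g + fF + \big[+%MM/0%MM]_(i <- l) U_(i)%MM)%MM.
Proof.
elim: l => [|i l IH] Hl g Hg.
  by rewrite big_nil addm0.
rewrite big_cons.
have H1 : ~ nf ((g + U_(i)) + fF)%MM.
  have -> : ((g + U_(i)) + fF = g + fF + U_(i))%MM.
    by apply/mnmP => j; rewrite !mnmDE; lia.
  apply: (Hl i) => //; exact: mem_head.
have Hl' : forall j, j \in l -> Hv j by move=> j Hj; apply: Hl; rewrite in_cons Hj orbT.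
have := IH Hl' _ H1.
set s := (\big[_/_]_(_ <- l) _).
have -> // : (g + U_(i) + fF + s = g + fF + (U_(i) + s))%MM.
by apply/mnmP => j; rewrite !mnmDE; lia.
Qed.

End Struct.



Section PhiDef.
Variable K : fieldType.
Variables (p : nat) (charK : p \in [pchar K]).
Variable n : nat.
Local Notation S := {mpoly K[n]}.
Variable e : nat.
Local Notation Q := (p ^ e)%N.
Variable psi : K -> K.
Hypothesis psiD : forall x y, psi (x + y) = psi x + psi y.
Hypothesis psiM : forall a b, psi (a ^+ Q * b) = a * psi b.
Variables (t m0 : 'X_{1..n}).

Definition mdiv (a : 'X_{1..n}) : 'X_{1..n} := [multinom (a i %/ Q)%N | i < n].
Definition cong (a : 'X_{1..n}) : bool := [forall i, (a i %% Q)%N == t i].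

Definition Phi (g : S) : S :=
  (\sum_(a <- msupp g | cong a) psi (g@_a) *: 'X_[mdiv a]) * 'X_[m0].

Lemma psi0 : psi 0 = 0.
Proof. by apply: (@addrI _ (psi 0)); rewrite -psiD !addr0. Qed.

Lemma Phi_any (g : S) (r : seq 'X_{1..n}) : uniq r -> {subset msupp g <= r} ->
  Phi g = (\sum_(a <- r | cong a) psi (g@_a) *: 'X_[mdiv a]) * 'X_[m0].
Proof.
move=> Hr Hsub; rewrite /Phi; congr (_ * _).
pose a : pred 'X_{1..n} := fun x => x \in msupp g.
have Hp : perm_eq (filter a r ++ filter (predC a) r) r := permEl (perm_filterC a r).
rewrite -(perm_big _ Hp) big_cat /=.
rewrite [X in _ = _ + X]big1_seq ?addr0; last first.
  move=> x /andP [_]; rewrite mem_filter => /andP [Hx _].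
  by rewrite memN_msupp_eq0 // psi0 scale0r.
apply: perm_big; apply: uniq_perm; [exact: msupp_uniq | exact: filter_uniq |].
move=> x; rewrite mem_filter /a; case Hx: (x \in msupp g) => //=.
by rewrite (Hsub _ Hx).
Qed.

Lemma PhiD (g h : S) : Phi (g + h) = Phi g + Phi h.
Proof.
set r := undup (msupp g ++ msupp h).
have Hu : uniq r := undup_uniq _.
rewrite (@Phi_any (g + h) r) // ?(@Phi_any g r) ?(@Phi_any h r) //.
- rewrite -mulrDl -big_split /=; congr (_ * _); apply: eq_bigr => x _.
  by rewrite mcoeffD psiD scalerDl.
- by move=> x Hx; rewrite mem_undup mem_cat Hx orbT.
- by move=> x Hx; rewrite mem_undup mem_cat Hx.
- by move=> x /msuppD_le Hx; rewrite mem_undup.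
Qed.

Lemma Phi0 : Phi 0 = 0.
Proof. by rewrite /Phi msupp_zero big_nil mul0r. Qed.

Lemma PhiN (g : S) : Phi (- g) = - Phi g.
Proof. by apply/eqP; rewrite -subr_eq0 opprK -PhiD addNr Phi0. Qed.

Lemma PhiB (g h : S) : Phi (g - h) = Phi g - Phi h.
Proof. by rewrite PhiD PhiN. Qed.

Lemma Phi_sum (I : Type) (r : seq I) (P : pred I) (F : I -> S) :
  Phi (\sum_(i <- r | P i) F i) = \sum_(i <- r | P i) Phi (F i).
Proof. apply: (big_morph Phi); [exact: PhiD | exact: Phi0]. Qed.

Lemma Phi_term (c : K) (a : 'X_{1..n}) :
  Phi (c *: 'X_[a]) = if cong a then (psi c *: 'X_[mdiv a]) * 'X_[m0] else 0.
Proof.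
rewrite (@Phi_any _ [:: a]) //; last first.
  by move=> x /msuppZ_le; rewrite msuppX.
rewrite big_cons big_nil mcoeffZ mcoeffX eqxx mulr1.
by case: (cong a); rewrite ?addr0 ?mul0r.
Qed.


Lemma Qpos : (0 < Q)%N.
Proof. by rewrite expn_gt0 (prime_gt0 (pcharf_prime charK)). Qed.

Lemma charS : p \in [pchar S].
Proof. by rewrite pchar_lalg. Qed.

Lemma cong_shift (b a : 'X_{1..n}) : cong (b *+ Q + a)%MM = cong a.
Proof.
by rewrite /cong; apply: eq_forallb => i; rewrite mnmDE mulmnE modnMDl.
Qed.

Lemma mdiv_shift (b a : 'X_{1..n}) : mdiv (b *+ Q + a)%MM = (b + mdiv a)%MM.
Proof.
apply/mnmP => i; rewrite mnmDE !mnmE mulmnE divnMDl ?Qpos //.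
Qed.

Lemma Phi_frob_term (c d : K) (b a : 'X_{1..n}) :
  Phi ((c *: 'X_[b]) ^+ Q * (d *: 'X_[a])) = (c *: 'X_[b]) * Phi (d *: 'X_[a]).
Proof.
have -> : (c *: 'X_[b]) ^+ Q * (d *: 'X_[a]) = (c ^+ Q * d) *: 'X_[b *+ Q + a] :> S.
  rewrite exprZn mpolyXn -!mul_mpolyC mpolyCM mpolyXD; ring.
rewrite !Phi_term cong_shift mdiv_shift.
case: (cong a); last by rewrite mulr0.
rewrite psiM -!mul_mpolyC mpolyCM mpolyXD; ring.
Qed.

Lemma Phi_frob (y g : S) : Phi (y ^+ Q * g) = y * Phi g.
Proof.
have Ey := mpolyE y; have Eg := mpolyE g.
rewrite [in LHS]Ey [in LHS]Eg (frob_sum charS) mulr_suml Phi_sum.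
rewrite [in RHS]Ey mulr_suml; apply: eq_bigr => b _.
rewrite mulr_sumr Phi_sum [in RHS]Eg Phi_sum mulr_sumr; apply: eq_bigr => a _.
exact: Phi_frob_term.
Qed.

End PhiDef.



Section Key.
Variable K : fieldType.
Variables (p : nat) (charK : p \in [pchar K]) (K_Ffin : F_finite_field K p).
Variable n : nat.
Local Notation S := {mpoly K[n]}.
Variable I : S -> Prop.
Variable M : 'X_{1..n} -> Prop.
Hypothesis HMsq : forall m, M m -> forall i : 'I_n, (m i <= 1)%N.
Hypothesis HMI : forall x, I x <-> ideal_gen (fun y => exists2 m, M m & y = 'X_[m]) x.
Variable R : comPzRingType.
Variable pi : {rmorphism S -> R}.
Hypothesis pi_surj : forall y : R, exists x, pi x = y.
Hypothesis pi_ker : forall x, pi x = 0 <-> I x.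
Variable qq : R -> Prop.
Hypothesis qq_prime : is_prime_ideal qq.
Variable Mq : 'X_{1..n} -> Prop.
Hypothesis HMq : forall x, qq x <-> ideal_gen (fun y => exists2 m, Mq m & y = pi 'X_[m]) x.
Variable e : nat.
Local Notation Q := (p ^ e)%N.
Local Notation fF0 := (fF pi qq).
Local Notation nf0 := (nf I).
Local Notation Hv0 := (Hv I pi qq).
Local Notation qv0 := (qv pi qq).

Lemma Phi_compat (psi : K -> K) (psiD : forall x y, psi (x + y) = psi x + psi y)
  (t : 'X_{1..n}) : (forall i, (0 < t i)%N -> Hv0 i) ->
  forall g, I g -> I (Phi p e psi t fF0 g).
Proof.
move=> Ht g Hg.
have HI := I_ideal HMI.
rewrite (mpolyE g) (Phi_sum p e psiD) big_seq; apply: (ideal_sum _ HI) => a Ha.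
rewrite (Phi_term p e psiD); case Hc: (cong p e t a); last exact: ideal0.
rewrite -mul_mpolyC -mulrA -mpolyXD; apply: (idealMl _ HI).
apply: NNPP => Hnot.
set l := [seq i <- enum 'I_n | (0 < t i)%N].
have Hl : forall i, i \in l -> Hv0 i by move=> i; rewrite mem_filter => /andP [/Ht].
have := Hv_iter Hl Hnot; apply.
have Hna : nf0 a := I_terms HMI Hg Ha.
apply: (nf_supp HMsq HMI _ Hna) => i Hai.
rewrite !mnmDE.
case: (posnP (t i)) => Hti.
- have := forallP Hc i; rewrite Hti => /eqP Hmod.
  have : (0 < a i %/ Q)%N.
    have Hq := Qpos charK e.
    rewrite divn_gt0 //; move: (divn_eq (a i) Q); rewrite Hmod addn0 => Ha'.
    by move: Hai; rewrite Ha'; case: (a i %/ Q)%N => [|k]; rewrite ?mul0n // => _; rewrite leq_pmull.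
  by rewrite mnmE; lia.
- have : (0 < (\big[+%MM/0%MM]_(j <- l) U_(j)%MM) i)%N.
    rewrite mnm_sumE (bigD1_seq i) /=; first by rewrite mnm1E eqxx.
      by rewrite mem_filter Hti mem_enum.
    by rewrite filter_uniq // enum_uniq.
  lia.
Qed.


Definition pre (y : R) : S := epsilon (inhabits 0) (fun x => pi x = y).
Lemma preK y : pi (pre y) = y.
Proof. by apply: (epsilon_spec (inhabits 0) (fun x => pi x = y)); apply: pi_surj. Qed.

Lemma phiR_cartier (psi : K -> K) (psiD : forall x y, psi (x + y) = psi x + psi y)
  (psiM : forall a b, psi (a ^+ Q * b) = a * psi b)
  (t : 'X_{1..n}) : (forall i, (0 < t i)%N -> Hv0 i) ->
  let phiR := fun y => pi (Phi p e psi t fF0 (pre y)) in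
  (forall g, phiR (pi g) = pi (Phi p e psi t fF0 g)) /\ cartier_map p e phiR.
Proof.
move=> Ht phiR.
have HpiE : forall g, phiR (pi g) = pi (Phi p e psi t fF0 g).
  move=> g; rewrite /phiR; apply/eqP; rewrite -subr_eq0 -rmorphB -(PhiB p e psiD).
  apply/eqP/pi_ker; apply: (Phi_compat psiD Ht); apply/pi_ker.
  by rewrite rmorphB preK subrr.
split => //; split.
- move=> x y; have [gx <-] := pi_surj x; have [gy <-] := pi_surj y.
  by rewrite -rmorphD !HpiE (PhiD p e psiD) rmorphD.
- move=> a b; have [ga <-] := pi_surj a; have [gb <-] := pi_surj b.
  by rewrite -rmorphXn -rmorphM !HpiE (Phi_frob charK psiD psiM) rmorphM.
Qed.


Lemma key (f : R) : cartier_contr p e qq f ->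
  exists f1 f2, [/\ f = f1 + f2, frob_power qq Q f1 & cartier_core p qq f2].
Proof.
move=> Hf.
have Hqi := qq_ideal qq_prime.
have Hq := Qpos charK e.
have p_pos : (0 < p)%N by exact: prime_gt0 (pcharf_prime charK).
have [h Hh] := pi_surj f; subst f.
pose C1 (a : 'X_{1..n}) := exists i, (Q <= a i)%N /\ qv0 i.
pose C2 (a : 'X_{1..n}) := exists i, (0 < a i)%N /\ ~ Hv0 i.
pose T a := (h@_a)%:MP * 'X_[a].
pose h1 := \sum_(a <- msupp h | pb (C1 a)) T a.
pose h2 := \sum_(a <- msupp h | ~~ pb (C1 a) && pb (C2 a)) T a.
pose h3 := \sum_(a <- msupp h | ~~ pb (C1 a) && ~~ pb (C2 a)) T a.
have Eh : h = h1 + h2 + h3.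
  rewrite {1}(mpoly_terms h) (bigID (fun a => pb (C1 a))) /= -addrA; congr (_ + _).
  by rewrite (bigID (fun a => pb (C2 a))).
have Hf1 : frob_power qq Q (pi h1).
  rewrite rmorph_sum big_seq_cond; apply: (ideal_sum _ (ideal_gen_is_ideal _)).
  move=> a /andP [_ /pbE [i [Hai Hqi']]].
  have le : (U_(i) *+ Q <= a)%MM.
    apply/mnm_lepP => j; rewrite mulmnE mnm1E; case: eqP => [<-|_]; first by rewrite mul1n.
    by rewrite mul0n.
  rewrite /T -(submK le) mpolyXD -mpolyXn !rmorphM rmorphXn.
  apply: (idealMl _ (ideal_gen_is_ideal _)); apply: (idealMl _ (ideal_gen_is_ideal _)).
  by apply: ideal_gen_in; exists (pi 'X_i).
have Hcore := cartier_core_ideal p Hqi.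
have Hf2 : cartier_core p qq (pi h2).
  rewrite rmorph_sum big_seq_cond; apply: (ideal_sum _ Hcore).
  move=> a /andP [_ /andP [_ /pbE [i [Hai Hnv]]]].
  have le : (U_(i) <= a)%MM by rewrite lep1mP -lt0n.
  rewrite /T -(submK le) mpolyXD !rmorphM.
  have Hx := notHv_core HMsq HMI pi_surj pi_ker qq_prime p_pos Hnv.
  apply: (idealMl _ Hcore); exact: (idealMl _ Hcore Hx).
suff H3 : h3 = 0.
  exists (pi h1), (pi h2); split => //.
  by rewrite Eh H3 addr0 rmorphD.
case: (classic (exists b, [/\ b \in msupp h, ~ C1 b & ~ C2 b])); last first.
  move=> Hno; rewrite /h3 big_seq_cond big1 // => a /andP [Ha /andP [/negP H1 /negP H2]].
  exfalso; apply: Hno; exists a; split => // HC.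
  - by apply: H1; apply/pbE.
  - by apply: H2; apply/pbE.
move=> [b [Hb HC1 HC2]]; exfalso.
pose t : 'X_{1..n} := [multinom (b i %% Q)%N | i < n].
have hb : h@_b != 0 by rewrite -mcoeff_msupp.
have [psi [psiD psiM psib]] := psi_exists_at charK K_Ffin e hb.
have Ht : forall i, (0 < t i)%N -> Hv0 i.
  move=> i; rewrite mnmE => Hti; apply: NNPP => Hnv; apply: HC2; exists i; split => //.
  by move: Hti; case: (b i) => [|k]; rewrite ?mod0n.
have [HpiE Hcart] := phiR_cartier psiD psiM Ht.
move: HpiE => /= HpiE.
have Hq3 : qq (pi (Phi p e psi t fF0 h3)).
  have := Hf _ Hcart; rewrite /= HpiE Eh !(PhiD p e psiD) !rmorphD.
  move=> Hall.
  have E1 : qq (pi (Phi p e psi t fF0 h1)).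
    by rewrite -HpiE; apply: (frob_contr Hqi Hf1 Hcart).
  have E2 : qq (pi (Phi p e psi t fF0 h2)).
    by rewrite -HpiE; apply: (Hf2 e _ Hcart).
  have := idealB Hqi Hall (idealD Hqi E1 E2).
  by rewrite addrC addKr.
pose P := \sum_(a <- msupp h | (~~ pb (C1 a) && ~~ pb (C2 a)) && cong p e t a)
           psi (h@_a) *: 'X_[mdiv p e a].
have EP : Phi p e psi t fF0 h3 = P * 'X_[fF0].
  rewrite /h3 (Phi_sum p e psiD) /P mulr_suml [in RHS]big_mkcondr /=.
  apply: eq_bigr => a _; rewrite /T mul_mpolyC (Phi_term p e psiD).
  by case: (cong p e t a); rewrite ?mul0r.
have HqP : qq (pi P).
  move: Hq3; rewrite EP rmorphM; case: qq_prime => _ _ Hp.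
  by move/Hp => [//|/(not_qq_fF qq_prime)].
have P0 : P = 0.
  apply: (polyF HMsq HMI pi_surj pi_ker qq_prime HMq _ HqP).
  move=> a' /msupp_sum_le /flattenP [s /mapP [a]].
  rewrite mem_filter => /andP [/andP [/andP [/negP H1 _] _] _] -> /msuppZ_le.
  rewrite msuppX mem_seq1 => /eqP -> i; rewrite mnmE divn_gt0 // => Hle Hqv.
  by apply: H1; apply/pbE; exists i.
have : P@_(mdiv p e b) = 1.
  rewrite /P raddf_sum big_mkcond (bigD1_seq b) ?msupp_uniq //=.
  have -> : ~~ pb (C1 b) && ~~ pb (C2 b) && cong p e t b.
    apply/andP; split; first by apply/andP; split; apply/negP => /pbE.
    by apply/forallP => i; rewrite mnmE.
  rewrite mcoeffZ mcoeffX eqxx mulr1 psib big1 ?addr0 // => a Hab.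
  case: ifP => [/andP [_ Hca]|_]; last by [].
  rewrite mcoeffZ mcoeffX; case: eqP => Hm; last by rewrite mulr0.
  exfalso; move/negP: Hab; apply; apply/eqP/mnmP => i.
  have := forallP Hca i; rewrite mnmE => /eqP Hmod.
  have := congr1 (fun m : 'X_{1..n} => m i) Hm; rewrite /= !mnmE => Hdiv.
  by rewrite (divn_eq (a i) Q) (divn_eq (b i) Q) Hmod Hdiv.
by rewrite P0 mcoeff0 => /eqP; rewrite eq_sym oner_eq0.
Qed.

End Key.



Theorem mainTheorem12
  (K : fieldType) (p : nat) (p_prime : prime p) (charK : p \in [pchar K])
  (K_Ffin : F_finite_field K p)
  (n : nat) (I : {mpoly K[n]} -> Prop) (I_sqfree : sqfree_monomial_ideal I)
  (R : comPzRingType) (pi : {rmorphism {mpoly K[n]} -> R})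
  (pi_surj : forall y : R, exists x, pi x = y)
  (pi_ker : forall x, pi x = 0 <-> I x)
  (qq : R -> Prop) (qq_prime : is_prime_ideal qq)
  (qq_mon : monomial_ideal_of pi qq)
  (Rbar : comPzRingType) (rho : {rmorphism R -> Rbar})
  (rho_surj : forall y : Rbar, exists x, rho x = y)
  (rho_ker : forall x, rho x = 0 <-> cartier_core p qq x)
  (e : nat) (f : R) :
  (cartier_contr p e qq f -> cartier_contr p e (img_pred rho qq) (rho f)) /\
  (frob_power (img_pred rho qq) (p ^ e) (rho f) <-> cartier_contr p e qq f).
Proof.
have [M [HMsq HMI]] := I_sqfree.
have [Mq HMq] := qq_mon.
have Hqi := qq_ideal qq_prime.
have Hci := cartier_contr_ideal p e Hqi.
have Himg : is_ideal (img_pred rho qq).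
  split.
  - by exists 0; [exact: ideal0 | rewrite rmorph0].
  - move=> _ _ [x1 Hx1 ->] [x2 Hx2 ->]; exists (x1 + x2); last by rewrite rmorphD.
    exact: idealD.
  - move=> a _ [x Hx ->]; have [r <-] := rho_surj a.
    by exists (r * x); [exact: idealMl | rewrite rmorphM].
have Hfimg : forall x, frob_power qq (p ^ e) x ->
    frob_power (img_pred rho qq) (p ^ e) (rho x).
  move=> x Hx.
  have HG := ideal_gen_is_ideal (fun y => exists2 x0, img_pred rho qq x0 & y = x0 ^+ (p ^ e)).
  apply: (@ideal_gen_min _ _ (fun x => frob_power (img_pred rho qq) (p ^ e) (rho x)) _ _ x Hx).
  - split.
    + by rewrite rmorph0; exact: (ideal0 (ideal_gen_is_ideal _)).
    + by move=> x1 x2 H1 H2; rewrite rmorphD; exact: (idealD (ideal_gen_is_ideal _)).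
    + by move=> a x1 H1; rewrite rmorphM; exact: (idealMl _ (ideal_gen_is_ideal _)).
  - move=> _ [y Hy ->]; rewrite rmorphXn; apply: ideal_gen_in.
    by exists (rho y) => //; exists y.
have H : cartier_contr p e qq f -> frob_power (img_pred rho qq) (p ^ e) (rho f).
  move=> Hf.
  have [f1 [f2 [-> Hf1 Hf2]]] := key charK K_Ffin HMsq HMI pi_surj pi_ker qq_prime HMq Hf.
  rewrite rmorphD (_ : rho f2 = 0) ?addr0; [exact: Hfimg | exact/rho_ker].
split.
- by move=> Hf; apply: (frob_contr Himg); exact: H.
- split; last exact: H.
  move=> Hfb.
  pose PR (y : Rbar) := forall x, rho x = y -> cartier_contr p e qq x.
  suff: PR (rho f) by apply.
  have Hker : forall x, rho x = 0 -> cartier_contr p e qq x.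
    by move=> x /rho_ker Hx; exact: (Hx e).
  apply: (ideal_gen_min _ _ Hfb).
  + split.
    * exact: Hker.
    * move=> y1 y2 H1 H2 x Hx; have [x1 Hx1] := rho_surj y1.
      rewrite -(subrK x1 x); apply: (idealD Hci); [apply: H2 | apply: H1] => //.
      by rewrite rmorphB Hx Hx1 addrC addKr.
    * move=> a y Hy x Hx; have [r Hr] := rho_surj a; have [z Hz] := rho_surj y.
      rewrite -(subrK (r * z) x); apply: (idealD Hci).
        by apply: Hker; rewrite rmorphB rmorphM Hx Hr Hz subrr.
      by apply: (idealMl _ Hci); apply: Hy.
  + move=> _ [g [x Hx ->] ->] z Hz.
    rewrite -(subrK (x ^+ (p ^ e)) z); apply: (idealD Hci).
      by apply: Hker; rewrite rmorphB rmorphXn Hz subrr.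
    apply: (frob_contr Hqi); apply: ideal_gen_in; by exists x.
Qed.
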